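(* Consider the Markov chain $\mathcal{G}$ described in the context, with parameters $r\ge1$, $p_c,p_1,\ldots,p_r\in[0,1]$. Assume $p_c<1$ and $p_c\cdot r\cdot\max\{p_1,\ldots,p_r\}<1$. Then for every block $\alpha\in\{1,\ldots,r\}^*$, $$\mathbb{E}[O(s_1^\alpha)]=\frac{\sum_{i=1}^r p_i}{1-p_c\sum_{i=1}^r p_i}\qquad\text{and}\qquad \mathbb{E}[N(s_1^\alpha)]=\frac{r+\sum_{i=1}^r p_i}{1-p_c\sum_{i=1}^r p_i}.$$
   Context: Fix an integer $r\ge 1$ and probabilities $p_c,p_1,\ldots,p_r\in[0,1]$. Words $\alpha\in\{1,\ldots,r\}^*$ (finite sequences, $\varepsilon$ the empty word, $\alpha\cdot i$ concatenation, $r^k$ the word of $k$ letters $r$) are called blocks. The Markov chain $\mathcal{G}$ has the countable state space $\{s_i^\alpha, c_i^\alpha : 1\le i\le r,\ \alpha\in\{1,\ldots,r\}^*\}\cup\{\sharp,\bot\}$, initial state $\sharp$, and the following transition probabilities (all unlisted transitions have probability $0$): $p(\sharp,s_1^\varepsilon)=p_c$, $p(\sharp,\bot)=1-p_c$; $p(s_i^\alpha,c_i^\alpha)=p_i$ for $1\le i\le r$; $p(s_i^\alpha,s_{i+1}^\alpha)=1-p_i$ for $1\le i<r$; $p(c_i^\alpha,s_1^{\alpha\cdot i})=p_c$ for $1\le i\le r$; $p(c_i^\alpha,s_{i+1}^\alpha)=1-p_c$ for $1\le i<r$; for every word of the form $\gamma=\beta\cdot i\cdot r^k$ with $1\le i<r$,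 $k\ge 0$: $p(s_r^{\gamma},s_{i+1}^\beta)=1-p_r$ and $p(c_r^{\gamma},s_{i+1}^\beta)=1-p_c$; for every $\gamma\in r^*$ (including $\varepsilon$): $p(s_r^\gamma,\bot)=1-p_r$, $p(c_r^\gamma,\bot)=1-p_c$; and $p(\bot,\bot)=1$. The block of $s_i^\alpha$ and of $c_i^\alpha$ is $\alpha$. The output states are the states $c_i^\beta$ (and $\sharp$). For a block $\alpha$ let $E_\alpha=\{s_j^\beta : 1\le j\le r,\ \beta\text{ a proper prefix of }\alpha\}\cup\{\bot\}$. For a state $s$ with block $\alpha$ and the chain $(X_n)$ started at $X_0=s$: $N(s)=\inf\{n\ge0 : X_n\in E_\alpha\}$ is the number of states visited before $E_\alpha$ is first reached, and $O(s)$ is the number of indices $0\le n< N(s)$ such that $X_n$ is an output state (the number of output states visited from $s$ before the block of $s$ is left upward). *)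

(* Defs.v *)
From HB Require Import structures.
From mathcomp Require Import all_boot all_order all_algebra.
From mathcomp Require Import all_classical all_reals all_analysis.
Set Implicit Arguments. Unset Strict Implicit. Unset Printing Implicit Defensive.
Import Order.TTheory GRing.Theory Num.Theory.
Import numFieldNormedType.Exports.
Local Open Scope classical_set_scope.
Local Open Scope ring_scope.

(* States of the Markov chain G.  [St i a] is s_i^a, [Ct i a] is c_i^a,
   blocks are words over nat (letters are meant to lie in 1..r). *)
Inductive state : Type :=
| St of nat & seq nat
| Ct of nat & seq nat
| Sharp
| Bot.

(* Target of the "leave block upward" transitions from s_r^g / c_r^g:
   g = b . i . r^k with i < r  ->  s_{i+1}^b ;  g in r^*  ->  Bot.
   [up_rev r l] works on l = rev g. *)
Fixpoint up_rev (r : nat) (l : seq nat) : state :=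
  match l with
  | [::] => Bot
  | x :: l' => if x == r then up_rev r l' else St x.+1 (rev l')
  end.

Definition up (r : nat) (g : seq nat) : state := up_rev r (rev g).

(* The transition
   probability p(x,y) is the sum of the probabilities of the entries with
   target y; unlisted transitions have probability 0. *)
Definition trans {R : nzRingType} (r : nat) (pc : R) (p : nat -> R) (x : state)
  : seq (state * R) :=
  match x with
  | Sharp => [:: (St 1 [::], pc); (Bot, 1 - pc)]
  | Bot => [:: (Bot, 1)]
  | St i a =>
      if (1 <= i <= r)%N then
        (Ct i a, p i) ::
        (if (i < r)%N then [:: (St i.+1 a, 1 - p i)] else [:: (up r a, 1 - p i)])
      else [::]
  | Ct i a =>
      if (1 <= i <= r)%N then
        (St 1 (rcons a i), pc) ::
        (if (i < r)%N then [:: (St i.+1 a, 1 - pc)] else [:: (up r a, 1 - pc)])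
      else [::]
  end.

Definition is_output (x : state) : bool :=
  match x with Ct _ _ | Sharp => true | _ => false end.

Definition inE (r : nat) (alpha : seq nat) (x : state) : bool :=
  match x with
  | St j b => (1 <= j <= r)%N && prefix b alpha && (size b < size alpha)%N
  | Bot => true
  | _ => false
  end.

(* probN n x = P_x( X_0, ..., X_n all outside E_alpha ) = P_x( N > n ). *)
Fixpoint probN {R : nzRingType} (r : nat) (pc : R) (p : nat -> R)
  (alpha : seq nat) (n : nat) (x : state) : R :=
  let av : R := (~~ inE r alpha x)%:R in
  match n with
  | 0 => av
  | n'.+1 => av * \sum_(yq <- trans r pc p x) yq.2 * probN r pc p alpha n' yq.1
  end.

(* probO n x = P_x( n < N and X_n is an output state ). *)
Fixpoint probO {R : nzRingType} (r : nat) (pc : R) (p : nat -> R)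
  (alpha : seq nat) (n : nat) (x : state) : R :=
  let av : R := (~~ inE r alpha x)%:R in
  match n with
  | 0 => av * (is_output x)%:R
  | n'.+1 => av * \sum_(yq <- trans r pc p x) yq.2 * probO r pc p alpha n' yq.1
  end.

(* E[N(x)] = sum_n P(N > n);  E[O(x)] = sum_n P(n < N, X_n output).
   The expectation equals v (finite) iff the partial sums converge to v. *)
Definition expN_is {R : realType} (r : nat) (pc : R) (p : nat -> R)
  (alpha : seq nat) (x : state) (v : R) : Prop :=
  (fun n : nat => \sum_(0 <= k < n) probN r pc p alpha k x) @ \oo --> v.

Definition expO_is {R : realType} (r : nat) (pc : R) (p : nat -> R)
  (alpha : seq nat) (x : state) (v : R) : Prop :=
  (fun n : nat => \sum_(0 <= k < n) probO r pc p alpha k x) @ \oo --> v.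

(* Main.v *)
Require Import Defs.
From HB Require Import structures.
From mathcomp Require Import all_boot all_order all_algebra.
From mathcomp Require Import all_classical all_reals all_analysis.
From mathcomp Require Import ring lra zify.
Import Order.TTheory GRing.Theory Num.Theory.
Import numFieldNormedType.Exports.
Local Open Scope classical_set_scope.
Local Open Scope ring_scope.

Section Gen.
Variables (R : realType) (r : nat) (pc : R) (p : nat -> R) (alpha : seq nat).

Definition av (x : state) : R := (~~ Defs.inE r alpha x)%:R.
Definition Pop (g : state -> R) (x : state) : R :=
  \sum_(yq <- trans r pc p x) yq.2 * g yq.1.

Lemma av_E x : Defs.inE r alpha x -> av x = 0.
Proof. by rewrite /av => ->. Qed.
Lemma av_nE x : ~~ Defs.inE r alpha x -> av x = 1.
Proof. by rewrite /av => ->. Qed.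
Lemma av_ge0 x : 0 <= av x.
Proof. exact: ler0n. Qed.

Lemma Pop_sum (g : nat -> state -> R) m n x :
  Pop (fun y => \sum_(m <= k < n) g k y) x = \sum_(m <= k < n) Pop (g k) x.
Proof.
rewrite /Pop exchange_big /=; apply: eq_bigr => yq _; by rewrite mulr_sumr.
Qed.

Lemma Pop_sub (g g' : state -> R) x :
  Pop (fun y => g y - g' y) x = Pop g x - Pop g' x.
Proof. rewrite /Pop -sumrB; apply: eq_bigr => yq _; by rewrite mulrBr. Qed.

Lemma Pop2 g {x y1 y2 q q'} : trans r pc p x = [:: (y1, q); (y2, q')] ->
  Pop g x = q * g y1 + q' * g y2.
Proof. by move=> E; rewrite /Pop E !big_cons big_nil addr0. Qed.

Definition TwoPt (G : state -> Prop) :=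
  forall x, G x -> ~~ Defs.inE r alpha x -> exists y1 y2 q,
    trans r pc p x = [:: (y1, q); (y2, 1 - q)] /\ 0 <= q <= 1 /\ G y1 /\ G y2.

Lemma gen_cvg (G : state -> Prop) (rho V h : state -> R) (F : nat -> state -> R) :
 TwoPt G ->
 (forall x, F 0%N x = 0) ->
 (forall n x, F n.+1 x = rho x + av x * Pop (F n) x) ->
 (forall n x, F n x <= F n.+1 x) ->
 (forall x, G x -> V x = rho x + av x * Pop V x) ->
 (forall x, G x -> 0 <= V x) ->
 (forall x, G x -> V x + av x * Pop h x <= h x) ->
 (forall x, G x -> 0 <= h x) ->
 forall x, G x -> (fun n => F n x) @ \oo --> V x.
Proof.
move=> H2 HF0 HFS Hmono HV HV0 Hh Hh0.
pose D n y := V y - F n y.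
have HD n x : G x -> D n.+1 x = av x * Pop (D n) x.
  move=> Gx; rewrite /D HFS {1}HV // Pop_sub; ring.
have monoP x (g g' : state -> R) : G x -> (forall y, G y -> g y <= g' y) ->
    av x * Pop g x <= av x * Pop g' x.
  move=> Gx Hg; case: (boolP (Defs.inE r alpha x)) => hE.
    by rewrite av_E // !mul0r.
  have [y1 [y2 [q [E [/andP[q0 q1] [G1 G2]]]]]] := H2 x Gx hE.
  rewrite av_nE // !mul1r (Pop2 g E) (Pop2 g' E).
  have := Hg _ G1; have := Hg _ G2; nra.
have D0 x : D 0%N x = V x by rewrite /D HF0 subr0.
have Dge0 n x : G x -> 0 <= D n x.
  elim: n x => [|n IH] x Gx; first by rewrite D0; exact: HV0.
  rewrite HD //; apply: le_trans (monoP x (fun _ => 0) (D n) Gx IH).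
  by rewrite /Pop big1 ?mulr0 // => yq _; rewrite mulr0.
have Dsum n x : G x -> \sum_(0 <= k < n) D k x <= h x.
  elim: n x => [|n IH] x Gx; first by rewrite big_geq //; exact: Hh0.
  rewrite big_nat_recl // D0.
  rewrite (eq_bigr (fun k => av x * Pop (D k) x)); last by move=> k _; rewrite HD.
  rewrite -mulr_sumr -Pop_sum.
  apply: le_trans (Hh x Gx); apply: lerD => //; exact: monoP.
have Dmono n x : D n.+1 x <= D n x by rewrite /D; have := Hmono n x; lra.
have Dle k d x : D (k + d)%N x <= D k x.
  elim: d => [|d IH]; first by rewrite addn0.
  by rewrite addnS; apply: le_trans IH.
have Dn n x : G x -> n%:R * D n x <= h x.
  move=> Gx; apply: le_trans (Dsum n x Gx).
  have -> : n%:R * D n x = \sum_(0 <= k < n) D n x.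
    by rewrite sumr_const_nat subn0 mulr_natl.
  apply: ler_sum_nat => k /andP[_ kn].
  by have := Dle k (n - k)%N x; rewrite subnKC // ltnW.
move=> x Gx; apply/cvgrPdist_lt => e e0.
near=> n.
have hn : h x / e < n%:R by near: n; exact: nbhs_infty_gtr.
have := Dn n x Gx; have := Dge0 n x Gx; have := Hh0 x Gx.
rewrite /D => h1 h2 h3; rewrite ger0_norm //.
rewrite ltr_pdivrMr // in hn.
nra.
Unshelve. all: end_near.
Qed.

End Gen.

Section Spec.
Variables (R : realType) (r : nat) (pc : R) (p : nat -> R) (alpha : seq nat).
Hypothesis Hr : (1 <= r)%N.
Hypothesis Hpc : 0 <= pc <= 1.
Hypothesis Hp : forall i : nat, (1 <= i <= r)%N -> 0 <= p i <= 1.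
Hypothesis HS : pc * \sum_(1 <= i < r.+1) p i < 1.
Hypothesis Hal : all (fun a => (1 <= a <= r)%N) alpha.

Definition inr (a : nat) : bool := (1 <= a <= r)%N.
Definition S := \sum_(1 <= i < r.+1) p i.
Definition Nv := (r%:R + S) / (1 - pc * S).
Definition Ov := S / (1 - pc * S).
Definition Aa i := \sum_(i <= j < r.+1) (1 + p j * (1 + pc * Nv)).
Definition Bb i := \sum_(i <= j < r.+1) p j * (1 + pc * Ov).
Definition TA (g : seq nat) := \sum_(j <- g) Aa j.+1.
Definition TB (g : seq nat) := \sum_(j <- g) Bb j.+1.

Definition Vf (x : state) : R :=
  if Defs.inE r alpha x then 0 else
  match x with
  | St i b => Aa i + TA (drop (size alpha) b)
  | Ct i b => 1 + pc * Nv + Aa i.+1 + TA (drop (size alpha) b)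
  | _ => 0 end.
Definition Wf (x : state) : R :=
  if Defs.inE r alpha x then 0 else
  match x with
  | St i b => Bb i + TB (drop (size alpha) b)
  | Ct i b => 1 + pc * Ov + Bb i.+1 + TB (drop (size alpha) b)
  | _ => 0 end.

Definition good (x : state) : Prop :=
  Defs.inE r alpha x \/ exists i g, [/\ inr i, all inr g &
     x = St i (alpha ++ g) \/ x = Ct i (alpha ++ g)].

Lemma S_ge0 : 0 <= S.
Proof. rewrite /S big_nat_cond; apply: sumr_ge0 => i /andP[hi _]. by case/andP: (Hp _ hi). Qed.

Lemma den_gt0 : 0 < 1 - pc * S.
Proof. rewrite subr_gt0; exact: HS. Qed.

Lemma Nv_ge0 : 0 <= Nv.
Proof. apply: divr_ge0; last exact: ltW den_gt0. apply: addr_ge0 => //; exact: S_ge0. Qed.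

Lemma Ov_ge0 : 0 <= Ov.
Proof. apply: divr_ge0; [exact: S_ge0|exact: ltW den_gt0]. Qed.

Lemma Ov_le_Nv : Ov <= Nv.
Proof. rewrite /Ov /Nv ler_pM2r ?invr_gt0 ?den_gt0 // lerDr. exact: ler0n. Qed.

Lemma Aa_rec i : (1 <= i <= r)%N -> Aa i = 1 + p i * (1 + pc * Nv) + Aa i.+1.
Proof. move=> /andP[_ h]; by rewrite /Aa big_ltn // ltnS. Qed.
Lemma Bb_rec i : (1 <= i <= r)%N -> Bb i = p i * (1 + pc * Ov) + Bb i.+1.
Proof. move=> /andP[_ h]; by rewrite /Bb big_ltn // ltnS. Qed.
Lemma Aa_end : Aa r.+1 = 0.
Proof. by rewrite /Aa big_geq. Qed.
Lemma Bb_end : Bb r.+1 = 0.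
Proof. by rewrite /Bb big_geq. Qed.

Lemma Aa1 : Aa 1 = Nv.
Proof.
rewrite /Aa big_split /= sumr_const_nat subn1 /= -mulr_suml -/S.
have hd := den_gt0. rewrite /Nv. field. by rewrite lt0r_neq0.
Qed.
Lemma Bb1 : Bb 1 = Ov.
Proof.
rewrite /Bb -mulr_suml -/S.
have hd := den_gt0. rewrite /Ov. field. by rewrite lt0r_neq0.
Qed.

Lemma in_range {i j} : (1 <= i)%N -> (i <= j < r.+1)%N -> (1 <= j <= r)%N.
Proof. lia. Qed.

Lemma Aa_ge0 i : (1 <= i)%N -> 0 <= Aa i.
Proof.
move=> hi; rewrite /Aa big_nat_cond; apply: sumr_ge0 => j /andP[hj _].
have /andP[h1 h2] := Hp _ (in_range hi hj).
case/andP: Hpc => c0 c1; have := mulr_ge0 c0 Nv_ge0. nra.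
Qed.

Lemma Bb_ge0 i : (1 <= i)%N -> 0 <= Bb i.
Proof.
move=> hi; rewrite /Bb big_nat_cond; apply: sumr_ge0 => j /andP[hj _].
have /andP[h1 h2] := Hp _ (in_range hi hj).
case/andP: Hpc => c0 c1; have := mulr_ge0 c0 Ov_ge0. nra.
Qed.

Lemma Bb_le_Aa i : (1 <= i)%N -> Bb i <= Aa i.
Proof.
move=> hi; rewrite /Aa /Bb big_nat_cond [X in _ <= X]big_nat_cond.
apply: ler_sum => j /andP[hj _].
have /andP[h1 h2] := Hp _ (in_range hi hj).
case/andP: Hpc => c0 c1; have := mulr_ge0 c0 Ov_ge0; have := ler_wpM2l c0 Ov_le_Nv. nra.
Qed.

Lemma TA_ge0 g : 0 <= TA g.
Proof. apply: sumr_ge0 => j _; exact: Aa_ge0. Qed.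
Lemma TB_ge0 g : 0 <= TB g.
Proof. apply: sumr_ge0 => j _; exact: Bb_ge0. Qed.
Lemma TB_le_TA g : TB g <= TA g.
Proof. apply: ler_sum => j _; exact: Bb_le_Aa. Qed.

Lemma up_rev_E l : all inr l ->
  match up_rev r l with
  | Bot => True
  | St j b => is_true ((1 <= j <= r)%N && prefix b (rev l) && (size b < size l)%N)
  | _ => False end.
Proof.
elim: l => [|x l IH] //= /andP[hx hl].
case: eqP => [Exr|hne].
  have := IH hl; case: (up_rev r l) => // j b /andP[/andP[hj hp] hs].
  rewrite hj rev_cons -cats1 prefix_catl //=; lia.
rewrite rev_cons prefix_rcons size_rev andbT /=.
move: hx; rewrite /inr; lia.
Qed.

Lemma up_inE : Defs.inE r alpha (up r alpha).
Proof.
have := up_rev_E (rev alpha); rewrite all_rev => /(_ Hal).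
rewrite /up; case: (up_rev r (rev alpha)) => // j b.
by rewrite revK size_rev.
Qed.

Lemma notE_St i g : Defs.inE r alpha (St i (alpha ++ g)) = false.
Proof. rewrite /= size_cat; apply/negbTE; rewrite negb_and; apply/orP; right; lia. Qed.

Lemma VSt i g : Vf (St i (alpha ++ g)) = Aa i + TA g.
Proof. by rewrite /Vf notE_St drop_size_cat. Qed.
Lemma VCt i g : Vf (Ct i (alpha ++ g)) = 1 + pc * Nv + Aa i.+1 + TA g.
Proof. by rewrite /Vf /= drop_size_cat. Qed.
Lemma WSt i g : Wf (St i (alpha ++ g)) = Bb i + TB g.
Proof. by rewrite /Wf notE_St drop_size_cat. Qed.
Lemma WCt i g : Wf (Ct i (alpha ++ g)) = 1 + pc * Ov + Bb i.+1 + TB g.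
Proof. by rewrite /Wf /= drop_size_cat. Qed.

Lemma TA_rcons g j : TA (rcons g j) = TA g + Aa j.+1.
Proof. by rewrite /TA big_rcons. Qed.
Lemma TB_rcons g j : TB (rcons g j) = TB g + Bb j.+1.
Proof. by rewrite /TB big_rcons. Qed.

Lemma up_cat {g} : all inr g ->
  (Defs.inE r alpha (up r (alpha ++ g)) /\ TA g = 0 /\ TB g = 0) \/
  exists j g', [/\ (1 <= j < r)%N, all inr g',
     up r (alpha ++ g) = St j.+1 (alpha ++ g'),
     TA g = Aa j.+1 + TA g' & TB g = Bb j.+1 + TB g'].
Proof.
elim/last_ind: g => [|g x IH].
  by move=> _; left; rewrite cats0 /TA /TB !big_nil; split => //; exact: up_inE.
rewrite all_rcons => /andP[hx hg].
rewrite /up -rcons_cat rev_rcons /= TA_rcons TB_rcons.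
case: eqP => [Exr|hne].
  subst x; rewrite Aa_end Bb_end !addr0.
  exact: IH.
right; exists x, g; split => //.
- move: hx hne; rewrite /inr; lia.
- by rewrite revK.
- by rewrite addrC.
- by rewrite addrC.
Qed.

Definition nxt i b := if (i < r)%N then St i.+1 b else up r b.

Lemma nxt_props {i g} : inr i -> all inr g ->
  good (nxt i (alpha ++ g)) /\ Vf (nxt i (alpha ++ g)) = Aa i.+1 + TA g /\
  Wf (nxt i (alpha ++ g)) = Bb i.+1 + TB g.
Proof.
move=> hi hg; rewrite /nxt; case: ifP => hir.
  rewrite VSt WSt; split => //; right; exists i.+1, g; split => //; last by left.
have -> : i = r by move: hi hir; rewrite /inr; lia.
case: (up_cat hg) => [[hE [eA eB]]|[j [g' [hj hg' -> eA eB]]]].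
  by rewrite /Vf /Wf hE Aa_end Bb_end eA eB !addr0; split => //; left.
rewrite VSt WSt eA eB Aa_end Bb_end !add0r; split => //.
right; exists j.+1, g'; split => //; last by left.
by move: hj; rewrite /inr; lia.
Qed.

Lemma two_point {x} : good x -> ~~ Defs.inE r alpha x -> exists y1 y2 q,
  trans r pc p x = [:: (y1, q); (y2, 1 - q)] /\ 0 <= q <= 1 /\ good y1 /\ good y2 /\
  Vf x = 1 + (q * Vf y1 + (1 - q) * Vf y2) /\
  Wf x = (is_output x)%:R + (q * Wf y1 + (1 - q) * Wf y2) /\
  `|Vf y1 - Vf y2| <= Nv + 1.
Proof.
case=> [->//|[i [g [hi hg [->|->]]]]] _; have hi' : (1 <= i <= r)%N := hi.
- exists (Ct i (alpha ++ g)), (nxt i (alpha ++ g)), (p i).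
  have [G2 [V2 W2]] := nxt_props hi hg.
  have hpi := Hp _ hi.
  split; first by rewrite /trans hi' /nxt; case: (i < r)%N.
  split => //; split; first by right; exists i, g; split => //; right.
  split => //.
  rewrite VSt VCt WSt WCt V2 W2 (Aa_rec _ hi') (Bb_rec _ hi') /=.
  split; first ring. split; first ring.
  have hN := Nv_ge0; case/andP: Hpc => c0 c1.
  have -> : 1 + pc * Nv + Aa i.+1 + TA g - (Aa i.+1 + TA g) = 1 + pc * Nv by ring.
  rewrite ger0_norm; last by rewrite addr_ge0 // mulr_ge0.
  nra.
- exists (St 1 (alpha ++ rcons g i)), (nxt i (alpha ++ g)), pc.
  have [G2 [V2 W2]] := nxt_props hi hg.
  split; first by rewrite /trans hi' /nxt rcons_cat; case: (i < r)%N.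
  split => //; split.
    right; exists 1%N, (rcons g i); split => //; last by left.
    by rewrite all_rcons hi.
  split => //.
  rewrite VSt VCt WSt WCt V2 W2 Aa1 Bb1 TA_rcons TB_rcons /=.
  split; first ring. split; first ring.
  have hA := TA_ge0 g; have hA' := Aa_ge0 _ (ltn0Sn i).
  have -> : Nv + (TA g + Aa i.+1) - (Aa i.+1 + TA g) = Nv by ring.
  rewrite ger0_norm; [lra | exact: Nv_ge0].
Qed.

Lemma Vf_ge0 {x} : good x -> 0 <= Vf x.
Proof.
case=> [hE|[i [g [hi hg [->|->]]]]]; first by rewrite /Vf hE.
- by rewrite VSt addr_ge0 ?TA_ge0 // Aa_ge0 //; case/andP: hi.
- rewrite VCt !addr_ge0 ?TA_ge0 ?Aa_ge0 //; case/andP: Hpc => c0 _.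
  by rewrite mulr_ge0 // Nv_ge0.
Qed.

Lemma Wf_ge0 {x} : good x -> 0 <= Wf x.
Proof.
case=> [hE|[i [g [hi hg [->|->]]]]]; first by rewrite /Wf hE.
- by rewrite WSt addr_ge0 ?TB_ge0 // Bb_ge0 //; case/andP: hi.
- rewrite WCt !addr_ge0 ?TB_ge0 ?Bb_ge0 //; case/andP: Hpc => c0 _.
  by rewrite mulr_ge0 // Ov_ge0.
Qed.

Lemma Wf_le_Vf {x} : good x -> Wf x <= Vf x.
Proof.
case=> [hE|[i [g [hi hg [->|->]]]]]; first by rewrite /Wf /Vf hE.
- rewrite WSt VSt lerD ?TB_le_TA // Bb_le_Aa //; by case/andP: hi.
- rewrite WCt VCt lerD ?TB_le_TA // lerD ?Bb_le_Aa // lerD //.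
  case/andP: Hpc => c0 _; by rewrite ler_wpM2l // Ov_le_Nv.
Qed.

Definition hf x := Vf x ^+ 2 + (Nv + 1) ^+ 2 * Vf x.

Lemma hf_ge0 {x} : good x -> 0 <= hf x.
Proof. move=> Gx; have := Vf_ge0 Gx; rewrite /hf => h0; by rewrite addr_ge0 ?sqr_ge0 // mulr_ge0 ?sqr_ge0. Qed.

Lemma hf_super {x} : good x -> Vf x + av R r alpha x * Pop R r pc p hf x <= hf x.
Proof.
move=> Gx; case: (boolP (Defs.inE r alpha x)) => hE.
  by rewrite av_E // mul0r /hf /Vf hE; lra.
have [y1 [y2 [q [E [/andP[q0 q1] [G1 [G2 [EV [_ Hd]]]]]]]]] := two_point Gx hE.
rewrite av_nE // mul1r (Pop2 R r pc p hf E) /hf EV.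
have h1 := Vf_ge0 G1; have h2 := Vf_ge0 G2; have hN := Nv_ge0.
move: Hd; rewrite ler_norml => /andP[d1 d2].
set V1 := Vf y1 in d1 d2 h1 *; set V2 := Vf y2 in d1 d2 h2 *.
set K := Nv + 1 in d1 d2 *.
have e1 : (V1 - V2) ^+ 2 <= K ^+ 2 by nra.
have e2 : 0 <= q * (1 - q) <= 1 by apply/andP; split; nra.
have e3 : q * (1 - q) * (V1 - V2) ^+ 2 <= K ^+ 2.
  case/andP: e2 => e2a e2b.
  apply: le_trans (_ : 1 * (V1 - V2) ^+ 2 <= _); last by rewrite mul1r.
  by apply: ler_wpM2r => //; exact: sqr_ge0.
have id : q * V1 ^+ 2 + (1 - q) * V2 ^+ 2 =
  (q * V1 + (1 - q) * V2) ^+ 2 + q * (1 - q) * (V1 - V2) ^+ 2 by ring.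
have hm : 0 <= q * V1 + (1 - q) * V2 by nra.
set m := q * V1 + (1 - q) * V2 in id hm *.
have -> : q * (V1 ^+ 2 + K ^+ 2 * V1) + (1 - q) * (V2 ^+ 2 + K ^+ 2 * V2) =
  (q * V1 ^+ 2 + (1 - q) * V2 ^+ 2) + K ^+ 2 * m by rewrite /m; ring.
rewrite id.
have hK : 0 <= K ^+ 2 by exact: sqr_ge0.
nra.
Qed.

Lemma TwoPt_good : TwoPt R r pc p alpha good.
Proof.
move=> x Gx hE; have [y1 [y2 [q [E [hq [G1 [G2 _]]]]]]] := two_point Gx hE.
by exists y1, y2, q.
Qed.

Lemma HV_N x : good x -> Vf x = av R r alpha x + av R r alpha x * Pop R r pc p Vf x.
Proof.
move=> Gx; case: (boolP (Defs.inE r alpha x)) => hE.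
  by rewrite av_E // mul0r /Vf hE addr0.
have [y1 [y2 [q [E [_ [G1 [G2 [EV _]]]]]]]] := two_point Gx hE.
by rewrite av_nE // mul1r (Pop2 R r pc p Vf E).
Qed.

Lemma HV_O x : good x -> Wf x =
  av R r alpha x * (is_output x)%:R + av R r alpha x * Pop R r pc p Wf x.
Proof.
move=> Gx; case: (boolP (Defs.inE r alpha x)) => hE.
  by rewrite av_E // !mul0r /Wf hE addr0.
have [y1 [y2 [q [E [_ [G1 [G2 [_ [EW _]]]]]]]]] := two_point Gx hE.
by rewrite av_nE // !mul1r (Pop2 R r pc p Wf E).
Qed.

Lemma Pop_ge0 g x : (forall y, 0 <= g y) -> 0 <= Pop R r pc p g x.
Proof.
move=> Hg; case/andP: Hpc => c0 c1.
case: x => [i a|i a||]; rewrite /Pop /trans.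
- case: ifP => hi; last by rewrite big_nil.
  have /andP[h0 h1] := Hp _ hi.
  case: ifP => _; rewrite !big_cons big_nil /= addr0;
  apply: addr_ge0; apply: mulr_ge0 => //; by rewrite subr_ge0.
- case: ifP => hi; last by rewrite big_nil.
  case: ifP => _; rewrite !big_cons big_nil /= addr0;
  apply: addr_ge0; apply: mulr_ge0 => //; by rewrite subr_ge0.
- rewrite !big_cons big_nil /= addr0;
  apply: addr_ge0; apply: mulr_ge0 => //; by rewrite subr_ge0.
- by rewrite !big_cons big_nil /= addr0 mul1r.
Qed.

Lemma probN_ge0 n x : 0 <= probN r pc p alpha n x.
Proof.
elim: n x => [|n IH] x /=; first exact: ler0n.
apply: mulr_ge0; first exact: ler0n.
exact: (Pop_ge0 (probN r pc p alpha n)).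
Qed.

Lemma probO_ge0 n x : 0 <= probO r pc p alpha n x.
Proof.
elim: n x => [|n IH] x /=; first by apply: mulr_ge0; exact: ler0n.
apply: mulr_ge0; first exact: ler0n.
exact: (Pop_ge0 (probO r pc p alpha n)).
Qed.

Lemma mainN : (fun n => \sum_(0 <= k < n) probN r pc p alpha k (St 1 alpha)) @ \oo --> Nv.
Proof.
have Gs : good (St 1 alpha) by right; exists 1%N, [::]; rewrite cats0; split => //; left.
have -> : Nv = Vf (St 1 alpha).
  by have := VSt 1 [::]; rewrite cats0 => ->; rewrite /TA big_nil addr0 Aa1.
apply: (gen_cvg R r pc p alpha good (av R r alpha) Vf hf
  (fun n x => \sum_(0 <= k < n) probN r pc p alpha k x)) => //.
- exact: TwoPt_good.
- by move=> x; rewrite big_geq.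
- move=> n x; rewrite big_nat_recl //; congr (_ + _).
  rewrite (eq_bigr (fun k => av R r alpha x * Pop R r pc p (probN r pc p alpha k) x)) //.
  by rewrite -mulr_sumr Pop_sum.
- move=> n x; rewrite big_nat_recr //= lerDl; exact: probN_ge0.
- exact: HV_N.
- by move=> x Gx; exact: Vf_ge0 Gx.
- by move=> x Gx; exact: hf_super Gx.
- by move=> x Gx; exact: hf_ge0 Gx.
Qed.

Lemma mainO : (fun n => \sum_(0 <= k < n) probO r pc p alpha k (St 1 alpha)) @ \oo --> Ov.
Proof.
have Gs : good (St 1 alpha) by right; exists 1%N, [::]; rewrite cats0; split => //; left.
have -> : Ov = Wf (St 1 alpha).
  by have := WSt 1 [::]; rewrite cats0 => ->; rewrite /TB big_nil addr0 Bb1.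
apply: (gen_cvg R r pc p alpha good (fun x => av R r alpha x * (is_output x)%:R) Wf hf
  (fun n x => \sum_(0 <= k < n) probO r pc p alpha k x)) => //.
- exact: TwoPt_good.
- by move=> x; rewrite big_geq.
- move=> n x; rewrite big_nat_recl //; congr (_ + _).
  rewrite (eq_bigr (fun k => av R r alpha x * Pop R r pc p (probO r pc p alpha k) x)) //.
  by rewrite -mulr_sumr Pop_sum.
- move=> n x; rewrite big_nat_recr //= lerDl; exact: probO_ge0.
- exact: HV_O.
- by move=> x Gx; exact: Wf_ge0 Gx.
- move=> x Gx; apply: le_trans (hf_super Gx); rewrite lerD2r; exact: Wf_le_Vf Gx.
- by move=> x Gx; exact: hf_ge0 Gx.
Qed.

End Spec.

Theorem theorem3p4 (R : realType) (r : nat) (pc : R) (p : nat -> R)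
  (alpha : seq nat) :
  (1 <= r)%N ->
  0 <= pc <= 1 ->
  (forall i : nat, (1 <= i <= r)%N -> 0 <= p i <= 1) ->
  pc < 1 ->
  pc * r%:R * \big[Num.max/0]_(1 <= i < r.+1) p i < 1 ->
  all (fun a => (1 <= a <= r)%N) alpha ->
  expO_is r pc p alpha (St 1 alpha)
    ((\sum_(1 <= i < r.+1) p i) / (1 - pc * \sum_(1 <= i < r.+1) p i)) /\
  expN_is r pc p alpha (St 1 alpha)
    ((r%:R + \sum_(1 <= i < r.+1) p i) / (1 - pc * \sum_(1 <= i < r.+1) p i)).
Proof.
move=> Hr Hpc Hp Hpc1 Hmax Hal.
have HS : pc * \sum_(1 <= i < r.+1) p i < 1.
  apply: le_lt_trans Hmax; rewrite -mulrA; case/andP: Hpc => c0 _.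
  apply: ler_wpM2l => //.
  set M := \big[Num.max/0]_(1 <= i < r.+1) p i.
  have -> : r%:R * M = \sum_(1 <= i < r.+1) M by rewrite sumr_const_nat subSS subn0 mulr_natl.
  apply: ler_sum_nat => i hi.
  rewrite /M; apply: (le_bigmax_seq (I := nat) 0 i xpredT p) => //.
  by rewrite mem_index_iota.
split.
- exact: (mainO _ _ _ _ _ Hr Hpc Hp HS Hal).
- exact: (mainN _ _ _ _ _ Hr Hpc Hp HS Hal).
Qed.
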